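(* Under the standing assumptions, for $\theta\in(\pi/2,\pi)$ one has $w(\theta)=0$ if and only if $a>1/4$ and $\theta=\cos^{-1}\!\left(-\frac{1}{2\sqrt a}\right)$.
   Context: Standing assumptions: $a,b\in\mathbb{R}$ with $b>0$, $1+a+b>0$, $9-27a+b>0$, $2-8a+8a^2+ab\ne0$, $b+1-a\ne0$. Let $f^*(\zeta,\theta)=(\zeta+2\cos\theta)(2\zeta\cos\theta+1)+b\zeta-a(\zeta+2\cos\theta)^3$. Under these assumptions, for each $\theta\in(\pi/2,\pi)$ the polynomial $f^*(\cdot,\theta)$ has exactly one real zero in $(-1,1)$; denote it $w(\theta)$ (so $w(\theta)=1/\zeta(\theta)$). *)

(* Defs.v *)
From Stdlib Require Import Reals Lra ClassicalEpsilon.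
Open Scope R_scope.

Definition fstar (a b zeta theta : R) : R :=
  (zeta + 2 * cos theta) * (2 * zeta * cos theta + 1) + b * zeta
  - a * (zeta + 2 * cos theta) ^ 3.

Definition standing (a b : R) : Prop :=
  b > 0 /\ 1 + a + b > 0 /\ 9 - 27 * a + b > 0 /\
  2 - 8 * a + 8 * a ^ 2 + a * b <> 0 /\ b + 1 - a <> 0.

(* w(theta): the (unique, under the standing assumptions) real zero of
   f^*(., theta) in (-1,1), selected by Hilbert's epsilon. *)
Definition w (a b theta : R) : R :=
  epsilon (inhabits 0) (fun z => -1 < z < 1 /\ fstar a b z theta = 0).

(* Main.v *)
Require Import Defs.
From Stdlib Require Import Reals Lra Psatz ClassicalEpsilon.
Open Scope R_scope.

Lemma hpos (a b u : R) : b > 0 -> 1 + a + b > 0 -> 9 - 27*a + b > 0 ->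
  -1 < u < 3 -> u^2 + b - a*u^3 > 0.
Proof.
  intros Hb H1 H9 Hu.
  destruct (Rle_or_lt (a*u) 1) as [Hau|Hau].
  - assert (u^2*(1-a*u) >= 0).
    { apply Rle_ge, Rmult_le_pos; nra. }
    nra.
  - destruct (Rle_or_lt u 0) as [Hu0|Hu0].
    +
      assert (a < 0) by nra.
      (* u^2 - a u^3 = u^2(1-au) >= 1-au ... need >= 1 + a *)
      assert (Hm1: u^2*(1 - a*u) >= 1 - a*u).
      { assert ((1-u^2)*(a*u-1) >= 0) by (apply Rle_ge, Rmult_le_pos; nra). nra. }
      assert (Hm: u^2*(1 - a*u) >= (1 + a)) by nra.
      nra.
    + (* u>0, a>0: h(u) >= h(3) *)
      assert (a > 0) by nra.
      assert (Hk: a*(u^2+3*u+9) >= u + 3) by nra.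
      assert ((3-u)*(a*(u^2+3*u+9) - (u+3)) >= 0) by (apply Rle_ge, Rmult_le_pos; nra).
      nra.
Qed.

Lemma fstar_expand a b z t : fstar a b z t =
  -a*z^3 + (2*cos t - 6*a*cos t)*z^2 + (1 + 4*(cos t)^2 + b - 12*a*(cos t)^2)*z
  + 2*cos t - 8*a*(cos t)^3.
Proof. unfold fstar; ring. Qed.

Lemma cos_range t : PI/2 < t < PI -> -1 < cos t < 0.
Proof.
  intros Ht. pose proof PI_RGT_0. split.
  - rewrite <- cos_PI. apply cos_decreasing_1; lra.
  - rewrite <- cos_PI2. apply cos_decreasing_1; lra.
Qed.

Lemma f_one a b t : standing a b -> PI/2 < t < PI -> fstar a b 1 t > 0.
Proof.
  intros [Hb [H1 [H9 _]]] Ht. pose proof (cos_range t Ht).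
  unfold fstar.
  pose proof (hpos a b (1 + 2*cos t) Hb H1 H9 ltac:(lra)).
  replace ((1 + 2 * cos t) * (2 * 1 * cos t + 1) + b * 1 - a * (1 + 2 * cos t) ^ 3)
    with ((1 + 2*cos t)^2 + b - a*(1 + 2*cos t)^3) by ring. lra.
Qed.

Lemma f_mone a b t : standing a b -> PI/2 < t < PI -> fstar a b (-1) t < 0.
Proof.
  intros [Hb [H1 [H9 _]]] Ht. pose proof (cos_range t Ht).
  unfold fstar.
  pose proof (hpos a b (1 - 2*cos t) Hb H1 H9 ltac:(lra)).
  replace ((-1 + 2 * cos t) * (2 * -1 * cos t + 1) + b * -1 - a * (-1 + 2 * cos t) ^ 3)
    with (-((1 - 2*cos t)^2 + b - a*(1 - 2*cos t)^3)) by ring. lra.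
Qed.

Lemma root_exists a b t : standing a b -> PI/2 < t < PI ->
  exists z, -1 < z < 1 /\ fstar a b z t = 0.
Proof.
  intros Hs Ht.
  pose proof (f_one a b t Hs Ht). pose proof (f_mone a b t Hs Ht).
  assert (Hc : continuity (fun z => fstar a b z t)).
  { unfold fstar. reg. }
  destruct (IVT _ (-1) 1 Hc ltac:(lra) H0 H) as [z [Hz Hfz]].
  exists z. split; [|exact Hfz].
  split; apply Rnot_le_lt; intro; destruct (Rle_lt_or_eq_dec _ _ H1) as [|E]; try lra;
  [rewrite E in Hfz | rewrite <- E in Hfz]; lra.
Qed.

Theorem mainTheorem11 (a b theta : R) :
  standing a b -> PI / 2 < theta < PI ->
  (w a b theta = 0 <-> (a > 1 / 4 /\ theta = acos (- (1 / (2 * sqrt a))))).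
Proof.
  intros Hs Ht. pose proof (cos_range theta Ht) as Hc.
  pose proof PI_RGT_0.
  set (c := cos theta) in *.
  split.
  - intros Hw.
    pose proof (epsilon_spec (inhabits 0) (fun z => -1 < z < 1 /\ fstar a b z theta = 0)
                  (root_exists a b theta Hs Ht)) as [_ Hf].
    fold (w a b theta) in Hf. rewrite Hw in Hf.
    rewrite fstar_expand in Hf. fold c in Hf.
    assert (H4 : 4*a*c^2 = 1).
    { assert (2*c*(1 - 4*a*c^2) = 0) by (rewrite <- Hf; ring).
      destruct (Rmult_integral _ _ H0); nra. }
    assert (Ha : a > 1/4) by nra.
    split; [exact Ha|].
    assert (Hsq : sqrt a * sqrt a = a) by (apply sqrt_sqrt; lra).
    assert (Hsp : sqrt a > 0) by (apply sqrt_lt_R0; lra).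
    assert (Hce : c = - (1 / (2 * sqrt a))).
    { assert ((2*sqrt a*c)^2 = 1) by nra.
      assert (Hn : 2*sqrt a*c < 0).
      { assert (sqrt a * (-c) > 0) by (apply Rmult_lt_0_compat; lra). lra. }
      assert (2*sqrt a*c = -1) by nra.
      apply (Rmult_eq_reg_l (2*sqrt a)); [|lra].
      replace (2 * sqrt a * - (1 / (2 * sqrt a))) with (-1) by (field; lra). lra. }
    rewrite <- Hce. unfold c. rewrite acos_cos; lra.
  - intros [Ha Hth].
    assert (Hsq : sqrt a * sqrt a = a) by (apply sqrt_sqrt; lra).
    assert (Hsp : sqrt a > 0) by (apply sqrt_lt_R0; lra).
    assert (Hs1 : sqrt a > 1/2).
    { destruct (Rle_or_lt (sqrt a) (1/2)); nra. }
    assert (Hx : 0 < 1 / (2 * sqrt a) < 1).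
    { split. apply Rdiv_lt_0_compat; lra.
      apply (Rmult_lt_reg_r (2*sqrt a)); [lra|].
      replace (1 / (2 * sqrt a) * (2 * sqrt a)) with 1 by (field; lra). lra. }
    assert (Hce : c = - (1 / (2 * sqrt a))).
    { unfold c. rewrite Hth. apply cos_acos. lra. }
    assert (H4 : 4*a*c^2 = 1).
    { rewrite Hce. replace (4 * a * (- (1 / (2 * sqrt a)))^2) with (a / (sqrt a * sqrt a)) by (field; lra).
      rewrite Hsq. field. lra. }
    assert (Hs' := Hs).
    destruct Hs' as [Hb [H1 [H9 _]]].
    assert (Hfz : forall z, fstar a b z theta = z * (-a*z^2 + 2*c*(1-3*a)*z + (b-2+4*c^2))).
    { intro z. rewrite fstar_expand. fold c.
      replace (8*a*c^3) with (2*c*(4*a*c^2)) by ring. rewrite H4.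
      replace (12*a*c^2) with (3*(4*a*c^2)) by ring. rewrite H4.
      replace (6*a*c) with (6*a*c) by ring. ring. }
    pose proof (f_one a b theta Hs Ht) as F1.
    pose proof (f_mone a b theta Hs Ht) as F2.
    rewrite Hfz in F1, F2.
    pose proof (epsilon_spec (inhabits 0) (fun z => -1 < z < 1 /\ fstar a b z theta = 0)
                  (root_exists a b theta Hs Ht)) as [Hz Hf].
    fold (w a b theta) in Hz, Hf.
    clearbody c. generalize dependent (w a b theta). intros z Hz Hf.
    rewrite Hfz in Hf.
    assert (Hq : -a*z^2 + 2*c*(1-3*a)*z + (b-2+4*c^2) > 0).
    { assert (E : -a*z^2 + 2*c*(1-3*a)*z + (b-2+4*c^2) =
        (1-z)/2 * ((-a*(-1)^2 + 2*c*(1-3*a)*(-1) + (b-2+4*c^2)))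
        + (1+z)/2 * (-a*1^2 + 2*c*(1-3*a)*1 + (b-2+4*c^2)) + a*(1-z^2)) by field.
      rewrite E.
      assert (a*(1-z^2) > 0) by nra.
      assert (Hm: (-1) * (-a*(-1)^2 + 2*c*(1-3*a)*(-1) + (b-2+4*c^2)) < 0) by lra.
      assert (1 * (-a*1^2 + 2*c*(1-3*a)*1 + (b-2+4*c^2)) > 0) by lra.
      nra. }
    destruct (Rmult_integral _ _ Hf); [assumption | lra].
Qed.
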